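(* Let $G=(V,E)$ be a connected graph and $\ell$ an $s$-cyclic labeling of $G$ (for some integer $s\ge 3$). Then either $G$ is acyclic or $G$ contains a unique cycle, whose length $k$ is divisible by $s$. Further, if $G$ contains a cycle $C$, then $C$ is an oriented (directed) cycle in the orientation induced by $\ell$, and all oriented paths in $G$ are oriented away from the vertices of $C$.
   Context: For $L=\{0,1,\dots,s-1\}$ with $s\ge 3$, a function $\ell:V\to L$ is an $s$-cyclic labeling of $G$ if every $v\in V$ has at most one neighbor $P(v)$ (the parent of $v$) with $\ell(P(v))\equiv \ell(v)-1 \pmod s$, and all other neighbors $w$ of $v$ satisfy $\ell(w)\equiv\ell(v)+1\pmod s$. The orientation induced by $\ell$ orients each edge $\{u,v\}$ as $(u,v)$ when $u=P(v)$, i.e. away from the parent. *)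

(* Defs.v *)
From mathcomp Require Import all_boot.
Set Implicit Arguments. Unset Strict Implicit. Unset Printing Implicit Defensive.

Definition simple_graph (V : finType) (e : rel V) : Prop :=
  symmetric e /\ irreflexive e.

Definition connected_graph (V : finType) (e : rel V) : Prop :=
  forall x y : V, connect e x y.

(* s-cyclic labeling with labels L = {0,...,s-1} = 'I_s:
   at most one neighbour w of v has l w = l v - 1 (mod s), i.e. l w + 1 = l v
   (mod s); every neighbour w of v has l w = l v - 1 or l w = l v + 1 (mod s). *)
Definition is_parent_of (V : finType) (e : rel V) (s : nat) (l : V -> 'I_s)
  (u v : V) : bool :=
  e v u && ((l u).+1 == l v %[mod s]).

Definition cyclic_labeling (V : finType) (e : rel V) (s : nat)
  (l : V -> 'I_s) : Prop :=
  forall v : V,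
    #|[pred w | is_parent_of e l w v]| <= 1 /\
    (forall w, e v w -> ~~ is_parent_of e l w v ->
       (l w : nat) == (l v).+1 %[mod s]).

Definition induced_arc (V : finType) (e : rel V) (s : nat) (l : V -> 'I_s) : rel V :=
  fun u v => is_parent_of e l u v.

Definition graph_cycle (V : finType) (e : rel V) (c : seq V) : bool :=
  [&& 2 < size c, uniq c & cycle e c].

Definition cycle_edge (V : finType) (c : seq V) (x y : V) : bool :=
  (x \in c) && (y \in c) && ((y == next c x) || (x == next c y)).

Definition same_cycle (V : finType) (c1 c2 : seq V) : Prop :=
  forall x y, cycle_edge c1 x y = cycle_edge c2 x y.

Definition oriented_cycle (V : finType) (a : rel V) (c : seq V) : Prop :=
  cycle a c \/ cycle a (rev c).

(* Main.v *)
Require Import Defs.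
From mathcomp Require Import all_boot.
From Stdlib Require Import Classical.
Set Implicit Arguments. Unset Strict Implicit. Unset Printing Implicit Defensive.

Section Gen.
Variable T : finType.

Lemma cyc_rot_head (c : seq T) x : uniq c -> x \in c ->
  exists q, fcycle (next c) (x :: q) /\ perm_eq c (x :: q) /\ size q = (size c).-1.
Proof.
move=> Uc xc; have [i q Hr] := rot_to xc.
exists q; split; first by rewrite -Hr rot_cycle; apply: cycle_next.
split; first by rewrite -Hr perm_sym perm_rot.
by rewrite -(size_rot i c) Hr.
Qed.

Lemma orbit_next (c : seq T) x y : uniq c -> x \in c -> y \in c ->
  exists k, y = iter k (next c) x.
Proof.
move=> Uc xc yc; have [q [Hf [Hp _]]] := cyc_rot_head Uc xc.
have : y \in x :: q by rewrite -(perm_mem Hp).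
rewrite (fcycle_consE Hf) => /trajectP[k _ ->]; by exists k.
Qed.

Lemma next_closure (c : seq T) (P : pred T) x : uniq c -> x \in c -> P x ->
  (forall z, z \in c -> P z -> P (next c z)) -> forall y, y \in c -> P y.
Proof.
move=> Uc xc Px HP y yc; have [k ->] := orbit_next Uc xc yc.
suff : (iter k (next c) x \in c) && P (iter k (next c) x) by case/andP.
elim: k => [|k /andP[IH1 IH2]] /=; first by rewrite xc Px.
by rewrite mem_next IH1 HP.
Qed.

Lemma next_next_neq (c : seq T) x : uniq c -> 2 < size c -> x \in c ->
  next c (next c x) != x.
Proof.
move=> Uc Hs xc; have [q [Hf [Hp Hq]]] := cyc_rot_head Uc xc.
have Uq : uniq (x :: q) by rewrite -(perm_uniq Hp).
move: Uq; rewrite (fcycle_consE Hf).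
have : size q = (size q).-2.+2 by rewrite Hq; case: (size c) Hs => [|[|[|n]]].
move=> -> /=; rewrite !inE => /andP[H _]; apply/negP => /eqP E; move: H; by rewrite E eqxx !orbT.
Qed.
End Gen.
Section Main.
Variables (V : finType) (e : rel V) (s : nat) (l : V -> 'I_s).
Hypotheses (Hsg : simple_graph e) (Hs : 3 <= s) (Hcl : cyclic_labeling e l).
Local Notation a := (induced_arc e l).

Lemma F1 u v : a u v -> e u v.
Proof. by case: Hsg => Hsym _; rewrite /induced_arc /is_parent_of Hsym => /andP[]. Qed.

Lemma F2 u v : e u v -> a u v || a v u.
Proof.
case: Hsg => Hsym _ => Huv; have [_ H] := Hcl v.
case Ha: (a u v) => //=.
have := H u; rewrite Hsym Huv => /(_ isT); rewrite /induced_arc in Ha; rewrite Ha => /(_ isT) Hm.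
by rewrite /induced_arc /is_parent_of Huv eq_sym.
Qed.

Lemma F3 u w v : a u v -> a w v -> u = w.
Proof.
have [H _] := Hcl v; move/card_le1_eqP: H => H Hu Hw.
by have := H u w Hu Hw.
Qed.

Lemma orient c : graph_cycle e c -> cycle a c \/ cycle a (rev c).
Proof.
case/and3P => Hsz Uc Cc.
have Hn : forall x, x \in c -> e x (next c x) by move=> x xc; exact: next_cycle Cc xc.
case Hh: (has (fun x => a x (next c x)) c).
- left; move/hasP: Hh => [x xc Hx]; apply: (cycle_from_next Uc).
  apply: (next_closure (P := fun z => a z (next c z)) Uc xc Hx) => z zc Hz.
  have yc : next c z \in c by rewrite mem_next.
  case/orP: (F2 (Hn _ yc)) => // Hb.
  have E := F3 Hz Hb.
  by move: (next_next_neq Uc Hsz zc); rewrite -E eqxx.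
- right; apply: (cycle_from_next); first by rewrite rev_uniq.
  move=> z; rewrite mem_rev => zc; rewrite (next_rev Uc).
  have yc : prev c z \in c by rewrite mem_prev.
  have := Hn _ yc; rewrite (next_prev Uc) => Hyz.
  case/orP: (F2 Hyz) => // Hf.
  move/negbT/hasPn: Hh => /(_ _ yc); by rewrite (next_prev Uc) Hf.
Qed.

Lemma orient' c : graph_cycle e c ->
  exists o, [/\ cycle a o, uniq o, c =i o & size o = size c].
Proof.
move=> Gc; have Uc : uniq c by case/and3P: Gc.
case: (orient Gc) => H.
- by exists c.
- exists (rev c); split => //; [by rewrite rev_uniq | by move=> x; rewrite mem_rev | exact: size_rev].
Qed.

Lemma pred_in c x u : graph_cycle e c -> x \in c -> a u x -> u \in c.
Proof.
move=> Gc xc Hu; have [o [Co Uo Ec _]] := orient' Gc.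
rewrite Ec in xc *; have := prev_cycle Co xc => Hp.
by rewrite (F3 Hu Hp) Ec mem_prev.
Qed.

Lemma noenter c : graph_cycle e c -> forall x p, path a x p ->
  last x p \in c -> all (mem c) (x :: p).
Proof.
move=> Gc x p; elim: p x => [|y p IH] x /=; first by rewrite andbT.
case/andP => Hxy Hp Hl; have /= /andP[yc Hall] := IH y Hp Hl.
by rewrite Hall yc (pred_in Gc yc Hxy).
Qed.

Definition reach (c : seq V) v := exists u p, [/\ u \in c, path a u p & last u p = v].

Lemma reach_fwd c w z : reach c w -> a w z -> reach c z.
Proof.
case=> u [p [uc Hp Hl]] Ha; exists u, (rcons p z); split => //.
- by rewrite rcons_path Hp Hl.
- by rewrite last_rcons.
Qed.

Lemma reach_bwd c w z : graph_cycle e c -> reach c w -> a z w -> reach c z.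
Proof.
move=> Gc [u [p [uc]]]; case/lastP: p => [|p y].
- move=> _ /= <- Ha; exists z, [::]; split => //; exact: pred_in Gc uc Ha.
- rewrite rcons_path last_rcons => /andP[Hp Ha] <- Hz.
  by exists u, p; split => //; rewrite (F3 Hz Ha).
Qed.

Lemma reach_all c v : graph_cycle e c -> connected_graph e -> reach c v.
Proof.
move=> Gc Hc; case: c Gc => [|x0 c] Gc; first by case/and3P: Gc.
have R0 : reach (x0 :: c) x0 by exists x0, [::]; rewrite mem_head.
case/connectP: (Hc x0 v) => p Hp ->.
have : forall x, reach (x0 :: c) x -> path e x p -> reach (x0 :: c) (last x p).
  elim: p {Hp} => [|y p IH] x R //= /andP[Hxy Hp].
  apply: IH Hp; case/orP: (F2 Hxy) => H; [exact: reach_fwd R H | exact: reach_bwd Gc R H].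
by move=> /(_ x0 R0 Hp).
Qed.

Lemma path_lab x p : path a x p -> l (last x p) = l x + size p %[mod s].
Proof.
elim: p x => [|y p IH] x /=; first by rewrite addn0.
case/andP => /andP[_ /eqP H] Hp; rewrite IH // -modnDml -H modnDml.
by rewrite addSnnS.
Qed.

Lemma cyc_div o : cycle a o -> s %| size o.
Proof.
case: o => [|x q] //= Hp; have := path_lab Hp.
rewrite last_rcons size_rcons -{1}(addn0 (l x)) => /eqP; rewrite eqn_modDl mod0n => /eqP H.
by rewrite /dvdn -H.
Qed.

Lemma edge_dir c u v : cycle a c \/ cycle a (rev c) -> uniq c -> a u v -> v \in c ->
  (v == next c u) || (u == next c v).
Proof.
move=> [] Co Uc Ha vc.
- have := prev_cycle Co vc => Hp; by rewrite (F3 Ha Hp) next_prev // eqxx.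
- rewrite -mem_rev in vc; have := prev_cycle Co vc; rewrite (prev_rev Uc) => Hp.
  by rewrite (F3 Ha Hp) eqxx orbT.
Qed.

Lemma edge_char c x y : graph_cycle e c ->
  cycle_edge c x y = [&& x \in c, y \in c & a x y || a y x].
Proof.
move=> Gc; have /and3P[_ Uc Cc] := Gc; rewrite /cycle_edge -andbA.
case xc: (x \in c) => //; case yc: (y \in c) => //=.
apply/idP/idP.
- case/orP => /eqP ->; [exact: F2 (next_cycle Cc xc) | by rewrite orbC; exact: F2 (next_cycle Cc yc)].
- have Ho := orient Gc; case/orP => H; first exact: edge_dir Ho Uc H yc.
  by rewrite orbC; exact: edge_dir Ho Uc H xc.
Qed.

Lemma cyc_subset c c' : graph_cycle e c -> graph_cycle e c' -> connected_graph e ->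
  {subset c' <= c}.
Proof.
move=> Gc Gc' Hc.
have [o' [Co' Uo' Ec' _]] := orient' Gc'.
have [u [uc uc']] : exists u, u \in c /\ u \in c'.
  case: c' Gc' {Ec'} => [|v c'] Gc'; first by case/and3P: Gc'.
  have [u [p [uc Hp Hl]]] := reach_all v Gc Hc.
  have := noenter Gc' Hp; rewrite Hl mem_head => /(_ isT) /= /andP[H _].
  by exists u.
have Ur : uniq (rev o') by rewrite rev_uniq.
have ur : u \in rev o' by rewrite mem_rev -Ec'.
move=> y; rewrite Ec' -mem_rev; apply: (next_closure (P := mem c) Ur ur uc).
move=> z; rewrite mem_rev => zo zc; rewrite (next_rev Uo').
exact: pred_in Gc zc (prev_cycle Co' zo).
Qed.
End Main.

Theorem lemma1 (V : finType) (e : rel V) (s : nat) (l : V -> 'I_s) :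
  simple_graph e -> connected_graph e -> 3 <= s -> cyclic_labeling e l ->
  ((forall c : seq V, ~~ graph_cycle e c) \/
   (exists c : seq V, [/\ graph_cycle e c, s %| size c &
      forall c' : seq V, graph_cycle e c' -> same_cycle c c'])) /\
  (forall c : seq V, graph_cycle e c ->
     [/\ oriented_cycle (induced_arc e l) c,
         (* every vertex is reached by an oriented path leaving C *)
         forall v : V, exists (u : V) (p : seq V),
           [/\ u \in c, path (induced_arc e l) u p & last u p = v] &
         (* no oriented path enters C from outside C *)
         forall (x : V) (p : seq V), path (induced_arc e l) x p ->
           last x p \in c -> all (mem c) (x :: p)]).
Proof.
move=> Hsg Hc Hs Hcl; split.
- case: (classic (exists c, graph_cycle e c)) => [[c Gc]|N]; last first.
    by left => c; apply/negP => H; apply: N; exists c.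
  right; exists c; split => //.
  + have [o [Co _ _ <-]] := orient' Hsg Hcl Gc; exact: cyc_div Co.
  + move=> c' Gc' x y; rewrite !(edge_char Hsg Hcl) //.
    have S1 := cyc_subset Hsg Hcl Gc Gc' Hc; have S2 := cyc_subset Hsg Hcl Gc' Gc Hc.
    have Ex : forall z, (z \in c) = (z \in c').
      by move=> z; apply/idP/idP => [/S2|/S1].
    by rewrite !Ex.
- move=> c Gc; split.
  + exact (orient Hsg Hcl Gc).
  + by move=> v; exact (reach_all Hsg Hcl v Gc Hc).
  + exact (noenter Hsg Hcl Gc).
Qed.
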